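(* Let $\{l,f_1,\dots,f_M\}$ be a set of generators of $H_2(\mathbb{CP}^2\# M\overline{\mathbb{CP}}^2;\mathbb Z)$, pairwise orthogonal for the intersection form, with $l$ the class of a complex line in $\mathbb{CP}^2$ and $f_i\cdot f_i=-1$. Let $\alpha_1,\dots,\alpha_k$, $k\ge2$, be classes of the form $\alpha_1=l-e^1_1-e^1_2-\dots-e^1_{b_1}$ and $\alpha_i=e^i_1-e^i_2-\dots-e^i_{b_i}$ for $i=2,\dots,k$, where $b_i\ge1$, each $e^i_j\in\{f_1,\dots,f_M\}$, and $e^i_j\ne e^i_{j'}$ for $j\ne j'$. Suppose $\alpha_i\cdot\alpha_j=1$ if $|i-j|=1$ and $\alpha_i\cdot\alpha_j=0$ if $|i-j|>1$. Let $A^1=\{e^1_1,\dots,e^1_{b_1}\}$ and $A^i=\{e^i_2,\dots,e^i_{b_i}\}$ for $i=2,\dots,k$. Then: (1) for every $j=2,\dots,k$ there is an index $i$ with $1\le i<j$ such that $e^j_1\in A^i$; moreover, if $e^j_1\in A^i$ with $i<j-1$, then $e^h_1\in A^i\cap A^j$ for some index $h$ with $i<h<j$; (2) for every $1\le i<j\le k$, $A^i\cap A^j\subseteq\{e^2_1,\dots,e^k_1\}$. *)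

(* Defs.v *)
From HB Require Import structures.
From mathcomp Require Import all_boot all_order all_algebra.
Set Implicit Arguments. Unset Strict Implicit. Unset Printing Implicit Defensive.
Import Order.TTheory GRing.Theory Num.Theory.
Local Open Scope ring_scope.

(* H_2(CP^2 # M \bar{CP}^2; Z) = Z^{1+M}, written in the orthogonal basis
   {l, f_1, ..., f_M}: a class is its coefficient function on [option 'I_M],
   with [None] the coordinate of l and [Some m] the coordinate of f_(m+1). *)
Definition cls (M : nat) := option 'I_M -> int.

Definition l_cls (M : nat) : cls M := fun c => if c is None then 1 else 0.
Definition f_cls (M : nat) (m : 'I_M) : cls M :=
  fun c => if c == Some m then 1 else 0.
Definition add_cls M (a b : cls M) : cls M := fun c => a c + b c.
Definition sub_cls M (a b : cls M) : cls M := fun c => a c - b c.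
Definition sum_f M (s : seq 'I_M) : cls M := fun c => \sum_(x <- s) f_cls x c.

Definition iform M (a b : cls M) : int :=
  a None * b None - \sum_(m : 'I_M) a (Some m) * b (Some m).

(* Data: for each index i (1-based), e1 i = e^i_1 and rest i = [e^i_2; ...; e^i_{b_i}]
   (so b_i = 1 + size (rest i) >= 1). *)
Definition alpha M (e1 : nat -> 'I_M) (rest : nat -> seq 'I_M) (i : nat) : cls M :=
  if i == 1%N then sub_cls (@l_cls M) (sum_f (e1 1%N :: rest 1%N))
  else sub_cls (f_cls (e1 i)) (sum_f (rest i)).

Definition Aset M (e1 : nat -> 'I_M) (rest : nat -> seq 'I_M) (i : nat) : seq 'I_M :=
  if i == 1%N then e1 1%N :: rest 1%N else rest i.

(* Main.v *)
Require Import Defs.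
From mathcomp Require Import all_boot all_order all_algebra.
From mathcomp Require Import zify.
Import Order.TTheory GRing.Theory Num.Theory.
Set Implicit Arguments. Unset Strict Implicit.
Local Open Scope ring_scope.

Definition cc M (e1 : nat -> 'I_M) (rest : nat -> seq 'I_M) (x : 'I_M) (i : nat) : int :=
  (x \in Aset e1 rest i)%:R - ((i != 1%N) && (e1 i == x))%:R.

Lemma sum_f_Some M (s : seq 'I_M) x : sum_f s (Some x) = (count_mem x s)%:R.
Proof.
rewrite /sum_f; elim: s => [|y s IH]; first by rewrite big_nil.
rewrite big_cons IH /= natrD; congr (_ + _).
rewrite /f_cls; case: (eqVneq x y) => [->|nxy]; first by rewrite !eqxx.
have -> : (Some x == Some y) = false by apply/eqP => -[] /eqP; rewrite (negbTE nxy).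
by rewrite ?(negbTE nxy) /= ?eq_sym ?(negbTE nxy).
Qed.

Lemma sum_f_None M (s : seq 'I_M) : sum_f s None = 0.
Proof. by rewrite /sum_f big1. Qed.

Lemma sub_clsE M (a b : cls M) c : sub_cls a b c = a c - b c.
Proof. by []. Qed.

Lemma alpha_Some M e1 rest i (x : 'I_M) : uniq (e1 i :: rest i) ->
  alpha e1 rest i (Some x) = - cc e1 rest x i.
Proof.
move=> hu; rewrite /alpha /cc /Aset.
case: (eqVneq i 1%N) => [ei|ni1].
  subst i; rewrite sub_clsE sum_f_Some count_uniq_mem //=.
  by rewrite sub0r subr0.
rewrite sub_clsE sum_f_Some count_uniq_mem; last by case/andP: hu.
rewrite /f_cls.
have -> : (Some x == Some (e1 i)) = (e1 i == x).
  by apply/eqP/eqP => [[->]|->].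
by case: (e1 i == x); case: (x \in rest i); rewrite /= ?opprB ?subr0 ?sub0r.
Qed.

Lemma alpha_None M e1 rest i : alpha (M:=M) e1 rest i None = (i == 1%N)%:R.
Proof.
rewrite /alpha; case: (eqVneq i 1%N) => [ei|ni1];
  by rewrite sub_clsE sum_f_None ?subr0.
Qed.

Lemma iform_cc M e1 rest i j : (i != j)%N ->
  uniq (e1 i :: rest i) -> uniq (e1 j :: rest j) ->
  iform (alpha (M:=M) e1 rest i) (alpha e1 rest j) =
  - \sum_(x : 'I_M) cc e1 rest x i * cc e1 rest x j.
Proof.
move=> nij hi hj; rewrite /iform !alpha_None.
have -> : (i == 1%N)%:R * (j == 1%N)%:R = 0 :> int.
  case: (eqVneq i 1%N) => [ei|]; last by rewrite mul0r.
  by subst i; rewrite eq_sym (negbTE nij) mulr0.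
rewrite sub0r; congr (- _); apply: eq_bigr => x _.
by rewrite !alpha_Some // mulrNN.
Qed.

Lemma cc_mem M e1 rest (x : 'I_M) i : uniq (e1 i :: rest i) ->
  x \in Aset e1 rest i -> cc e1 rest x i = 1.
Proof.
move=> hu hx; rewrite /cc hx.
case: (eqVneq i 1%N) => [->|ni1] /=; first by rewrite subr0.
move: hx; rewrite /Aset (negbTE ni1) => hx.
case: (eqVneq (e1 i) x) => [ex|]; last by rewrite subr0.
by move: hu; rewrite /= ex hx.
Qed.

Lemma cc_pos M e1 rest (x : 'I_M) i : 0 < cc e1 rest x i -> x \in Aset e1 rest i.
Proof. by rewrite /cc; case: (x \in _); case: (_ && _). Qed.

Lemma cc_neg M e1 rest (x : 'I_M) i : cc e1 rest x i < 0 -> (i != 1%N) /\ e1 i = x.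
Proof.
rewrite /cc; case: (x \in _); case: (eqVneq i 1%N) => //= _; case: (eqVneq (e1 i) x) => //.
Qed.

Lemma cc_other M e1 rest (x : 'I_M) i : ~~ ((i != 1%N) && (e1 i == x)) ->
  cc e1 rest x i = (x \in Aset e1 rest i)%:R.
Proof. by rewrite /cc => /negbTE ->; rewrite subr0. Qed.

Lemma cc_e M e1 rest i : (i != 1%N) -> uniq (e1 i :: rest i) ->
  cc (M:=M) e1 rest (e1 i) i = -1.
Proof.
move=> ni hu; rewrite /cc ni eqxx /Aset (negbTE ni).
by case/andP: hu => /negbTE -> _; rewrite sub0r.
Qed.

Lemma cc_bounds M e1 rest (x : 'I_M) i : -1 <= cc e1 rest x i <= 1.
Proof. rewrite /cc; set a := (x \in _); set b := ((i != 1%N) && _); by case: a; case: b. Qed.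

Lemma sum_neg_ex (F : nat -> int) a b : \sum_(a <= m < b) F m < 0 ->
  exists m, (a <= m < b)%N /\ F m < 0.
Proof.
elim: b => [|b IH]; first by rewrite big_geq.
case: (leqP a b) => hab; last by rewrite big_geq.
rewrite big_nat_recr //= => h.
case: (ltrP (F b) 0) => hF; first by exists b; rewrite hab ltnSn.
have : \sum_(a <= i < b) F i < 0.
  by apply: (le_lt_trans _ h); rewrite lerDl.
move/IH => [m [/andP [h1 h2] h3]]; exists m; split => //.
by rewrite h1 (ltn_trans h2).
Qed.

Lemma sum_pos_ex (F : nat -> int) a b : 0 < \sum_(a <= m < b) F m ->
  exists m, (a <= m < b)%N /\ 0 < F m.
Proof.
move=> h; have [|m [hm hF]] := @sum_neg_ex (fun m => - F m) a b.
  by rewrite sumrN oppr_lt0.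
by exists m; split => //; rewrite -oppr_lt0.
Qed.

Lemma sum_pos_fin (I : finType) (P : pred I) (F : I -> int) :
  0 < \sum_(x | P x) F x -> exists x, P x /\ 0 < F x.
Proof.
case: (pickP (fun x => P x && (0 < F x))) => [x /andP [] | H]; first by exists x.
have : \sum_(x | P x) F x <= 0.
  apply: sumr_le0 => x Px; move: (H x); rewrite Px /= => /negbT; by rewrite -leNgt.
by rewrite leNgt => /negbTE ->.
Qed.

Theorem lemma4p3 (M k : nat) (e1 : nat -> 'I_M) (rest : nat -> seq 'I_M)
  (hk : (2 <= k)%N)
  (huniq : forall i, (1 <= i <= k)%N -> uniq (e1 i :: rest i))
  (hadj : forall i j, (1 <= i <= k)%N -> (1 <= j <= k)%N ->
            (i.+1 == j)%N || (j.+1 == i)%N ->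
            iform (alpha e1 rest i) (alpha e1 rest j) = 1)
  (hfar : forall i j, (1 <= i <= k)%N -> (1 <= j <= k)%N ->
            (i.+1 < j)%N || (j.+1 < i)%N ->
            iform (alpha e1 rest i) (alpha e1 rest j) = 0) :
  (* (1) *)
  (forall j, (2 <= j <= k)%N ->
     exists i, (1 <= i < j)%N /\ e1 j \in Aset e1 rest i) /\
  (forall i j, (2 <= j <= k)%N -> (1 <= i)%N -> (i < j.-1)%N ->
     e1 j \in Aset e1 rest i ->
     exists h, (i < h < j)%N /\ e1 h \in Aset e1 rest i /\ e1 h \in Aset e1 rest j) /\
  (* (2) *)
  (forall i j, (1 <= i)%N -> (i < j)%N -> (j <= k)%N ->
     forall x, x \in Aset e1 rest i -> x \in Aset e1 rest j ->
     exists h, (2 <= h <= k)%N /\ x = e1 h).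
Proof.
pose c := cc e1 rest.
have rel : forall i j, (1 <= i)%N -> (i < j)%N -> (j <= k)%N ->
    \sum_(x : 'I_M) c x i * c x j = - ((i.+1 == j)%:R).
  move=> i j h1 hij hj.
  have hi : (1 <= i <= k)%N by apply/andP; split => //; lia.
  have hj' : (1 <= j <= k)%N by apply/andP; split => //; lia.
  have nij : (i != j)%N by rewrite neq_ltn hij.
  have := iform_cc nij (huniq _ hi) (huniq _ hj') => H.
  rewrite -[LHS]opprK -H.
  case: (eqVneq i.+1 j) => e.
    by rewrite hadj // e eqxx.
  by rewrite hfar // ltn_neqAle e hij.
have inv : forall n, (n <= k)%N -> forall x,
    0 <= \sum_(1 <= m < n.+1) c x m <= 1.
  elim=> [|n IH] hn x; first by rewrite big_geq.
  case: n IH hn => [|n] IH hn.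
    by rewrite big_nat1 /c /cc eqxx /=; case: (x \in _).
  pose y := e1 n.+2.
  pose P z := \sum_(1 <= m < n.+2) c z m.
  have IH' : forall z, 0 <= P z <= 1 by move=> z; apply: IH; lia.
  have key : \sum_(x : 'I_M) c x n.+2 * P x = -1.
    rewrite (eq_bigr (fun x => \sum_(1 <= m < n.+2) c x m * c x n.+2)); last first.
      by move=> z _; rewrite mulr_sumr; apply: eq_bigr => m _; rewrite mulrC.
    rewrite exchange_big /=.
    rewrite (eq_big_nat _ _ (F2 := fun m => - ((m.+1 == n.+2)%:R))); last first.
      by move=> m hm; apply: rel; lia.
    rewrite big_nat_recr //= eqxx big_nat_cond big1 ?add0r // => m /andP [hm _].
    by case/andP: hm => _ hm; rewrite eqSS ltn_eqF ?oppr0.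
  have hun : uniq (e1 n.+2 :: rest n.+2) by apply: huniq; lia.
  rewrite big_nat_recr //= -/(P x).
  clearbody P.
  have cy : c y n.+2 = -1 by apply: cc_e.
  have cother : forall z, z != y -> c z n.+2 = (z \in Aset e1 rest n.+2)%:R.
    move=> z nz; apply: cc_other; apply/negP => /andP [_ /eqP e]; by move: nz; rewrite /y -e eqxx.
  have fge : forall z, z != y -> 0 <= c z n.+2 * P z.
    move=> z nz; rewrite cother //; apply: mulr_ge0; first by case: (z \in _).
    by case/andP: (IH' z).
  move: key; rewrite (bigD1 y) //= cy => key.
  move: key; set S := (X in _ + X = _) => key.
  have hS : 0 <= S by rewrite /S; apply: sumr_ge0 => z hz; apply: fge.
  have Py : P y = 1 by case/andP: (IH' y) => h0 h1; move: hS key; clearbody S; rewrite mulN1r; lia.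
  have S0 : S = 0 by move: Py hS key; clearbody S; rewrite mulN1r; lia.
  have fz : forall z, z != y -> c z n.+2 * P z = 0.
    move=> z hz; apply: (psumr_eq0P fge) => //.

  case: (eqVneq x y) => [->|nxy]; first by rewrite Py cy subrr lexx.
  move: (fz x nxy) (IH' x); rewrite cother //.
  case: (x \in _) => /=; last by rewrite addr0.
  by rewrite mul1r => ->.
have L2 : forall i j x, (1 <= i)%N -> (i < j)%N -> (j <= k)%N ->
    x \in Aset e1 rest i -> x \in Aset e1 rest j ->
    exists m, (i < m < j)%N /\ (m != 1)%N /\ e1 m = x.
  move=> i j x h1 hij hj hxi hxj.
  have ci : c x i = 1 by apply: cc_mem => //; apply: huniq; lia.
  have cj : c x j = 1 by apply: cc_mem => //; apply: huniq; lia.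
  have := inv j hj x; rewrite big_nat_recr; last by lia.
  rewrite (@big_cat_nat _ _ _ i.+1) //=.
  rewrite big_nat_recr //= cj ci.
  have := inv i.-1 ltac:(lia) x; rewrite prednK // => hP hQ.
  have : \sum_(i.+1 <= m < j) c x m < 0.
    case/andP: hP => hP0 _; case/andP: hQ => _; move: hP0.
    set U := \sum_(1 <= m < i) c x m; set T := \sum_(i.+1 <= m < j) c x m.
    clearbody U T; lia.
  move/sum_neg_ex => [m [hm /cc_neg [m1 em]]].
  by exists m; split => //; lia.
split.
  move=> j hj; pose y := e1 j.
  have hun : uniq (e1 j :: rest j) by apply: huniq; lia.
  have cy : c y j = -1 by apply: cc_e => //; lia.
  have := inv j ltac:(lia) y; rewrite big_nat_recr; last by lia.
  rewrite /= cy => h.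
  have : 0 < \sum_(1 <= m < j) c y m.
    case/andP: h => h _; move: h; set T := \sum_(1 <= m < j) c y m.
    clearbody T; lia.
  move/sum_pos_ex => [m [hm /cc_pos hym]].
  by exists m; split.
split.
  move=> i j hj h1 hij hyi; pose y := e1 j.
  have hunj : uniq (e1 j :: rest j) by apply: huniq; lia.
  have huni : uniq (e1 i :: rest i) by apply: huniq; lia.
  have cy : c y j = -1 by apply: cc_e => //; lia.
  have cyi : c y i = 1 by apply: cc_mem.
  have := rel i j h1 ltac:(lia) ltac:(lia).
  have -> : (i.+1 == j) = false by apply/negbTE; lia.
  rewrite (bigD1 y) //= cy cyi oppr0.
  set T := (X in _ + X = _) => H.
  have : 0 < T by move: H; clearbody T; lia.
  rewrite /T; move/sum_pos_fin => [x [nxy hx]].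
  have cxj : c x j = (x \in Aset e1 rest j)%:R.
    apply: cc_other; apply/negP => /andP [_ /eqP e]; by move: nxy; rewrite /y -e eqxx.
  move: hx; rewrite cxj; case hxj: (x \in _) => /=; last by rewrite mulr0 ltxx.
  rewrite mulr1 => /cc_pos hxi.
  have [m [hm [_ em]]] := L2 i j x h1 ltac:(lia) ltac:(lia) hxi hxj.
  by exists m; rewrite em.
move=> i j h1 hij hj x hxi hxj.
have [m [hm [_ em]]] := L2 i j x h1 hij hj hxi hxj.
by exists m; split; [lia | rewrite em].
Qed.
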